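(* Consider a particle in the plane with dimensionless canonical observables $x,y,p_x,p_y$ ($[x,p_x]=[y,p_y]=i$, other commutators zero) and Hamiltonian $H(t)=\tfrac12\big(p_x^2+p_y^2+\beta(t)^2(x^2+y^2)\big)-\beta(t)M_z$, $M_z=xp_y-yp_x$, where $\beta:\mathbb R\to\mathbb R$ is piecewise continuous, periodic with period $1$, satisfies $\beta(k)=0$ for all $k\in\mathbb Z$, and $\int_0^1\beta(t)\,dt=0$. Let $u(t)$ be the $4\times4$ evolution matrix, $(x(t),y(t),p_x(t),p_y(t))^T=u(t)(x,y,p_x,p_y)^T$ for the classical or Heisenberg variables. Suppose the evolution is a loop that closes for the first time after $n>1$ periods, i.e. $u(n)=\mathbb 1$ and $u(j)\neq\mathbb 1$ for $j=1,\dots,n-1$. Then the loop center $\mathbf X=\frac1n\int_0^n(x(t),y(t))\,dt$ vanishes identically.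
   Context: Time is dimensionless (period of $\beta$ equal to $1$), $\hbar=1$, unit mass. The Hamiltonian is quadratic, so the classical and Heisenberg trajectories are given by the same real matrix $u(t)$. *)

(* Defs.v *)
From Stdlib Require Import Reals Lra.
From Coquelicot Require Import Coquelicot.
Open Scope R_scope.

(* Piecewise continuity on a compact interval [a,b]: a finite partition
   a = t_0 < t_1 < ... < t_m = b such that on each open piece (t_k, t_{k+1})
   f agrees with a continuous function g (i.e. f extends continuously to
   each closed piece, so it has finite one-sided limits at the break points). *)
Definition piecewise_continuous_on (f : R -> R) (a b : R) : Prop :=
  exists (m : nat) (t : nat -> R),
    t O = a /\ t m = b /\
    (forall k, (k < m)%nat -> t k < t (S k)) /\
    (forall k, (k < m)%nat ->
       exists g : R -> R, (forall s, continuous g s) /\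
         (forall s, t k < s < t (S k) -> g s = f s)).

Definition piecewise_continuous (f : R -> R) : Prop :=
  forall a b, a < b -> piecewise_continuous_on f a b.

(* 4x4 real matrices as functions of indices 0..3,
   ordering of phase-space coordinates: (x, y, p_x, p_y). *)
Definition mat4 := nat -> nat -> R.

Definition is_id4 (M : mat4) : Prop :=
  forall i j, (i < 4)%nat -> (j < 4)%nat -> M i j = if Nat.eqb i j then 1 else 0.

(* Hamiltonian matrix of H = 1/2 (p_x^2 + p_y^2 + b^2 (x^2+y^2)) - b (x p_y - y p_x):
   dx/dt = p_x + b y,  dy/dt = p_y - b x,
   dp_x/dt = -b^2 x + b p_y,  dp_y/dt = -b^2 y - b p_x. *)
Definition Amat (b : R) : mat4 := fun i k =>
  match i, k with
  | O, S O => b     | O, S (S O) => 1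
  | S O, O => - b   | S O, S (S (S O)) => 1
  | S (S O), O => - (b * b) | S (S O), S (S (S O)) => b
  | S (S (S O)), S O => - (b * b) | S (S (S O)), S (S O) => - b
  | _, _ => 0
  end.

Definition mulA (b : R) (M : mat4) (i j : nat) : R :=
  Amat b i 0%nat * M 0%nat j + Amat b i 1%nat * M 1%nat j
  + Amat b i 2%nat * M 2%nat j + Amat b i 3%nat * M 3%nat j.

(* u is the evolution matrix: u(t) = 1 + int_0^t A(beta(s)) u(s) ds
   (integral form of u' = A u, u(0) = 1, appropriate for piecewise
   continuous beta). *)
Definition evolution_matrix (beta : R -> R) (u : R -> mat4) : Prop :=
  forall t i j, (i < 4)%nat -> (j < 4)%nat ->
    is_RInt (fun s => mulA (beta s) (u s) i j) 0 t
            (u t i j - (if Nat.eqb i j then 1 else 0)).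

(* Loop center X = (1/n) int_0^n (x(t), y(t)) dt, for initial data z;
   component i = 0 (x) or 1 (y). *)
Definition loop_center (u : R -> mat4) (n : nat) (z : nat -> R) (i : nat) : R :=
  / INR n * RInt (fun t => u t i 0%nat * z 0%nat + u t i 1%nat * z 1%nat
                           + u t i 2%nat * z 2%nat + u t i 3%nat * z 3%nat) 0 (INR n).

(* Main.v *)
Require Import Defs.
From Stdlib Require Import Reals Lra Lia.
From Coquelicot Require Import Coquelicot.
Open Scope R_scope.

Lemma Dplus (f g : R -> R) (x a b : R) : is_derive f x a -> is_derive g x b -> is_derive (fun t => f t + g t) x (a+b).
Proof. intros H1 H2. exact (is_derive_plus f g x a b H1 H2). Qed.
Lemma Dminus (f g : R -> R) (x a b : R) : is_derive f x a -> is_derive g x b -> is_derive (fun t => f t - g t) x (a-b).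
Proof. intros H1 H2. exact (is_derive_minus f g x a b H1 H2). Qed.
Lemma Dmult (f g : R -> R) (x a b : R) : is_derive f x a -> is_derive g x b -> is_derive (fun t => f t * g t) x (a * g x + f x * b).
Proof. intros H1 H2. exact (is_derive_mult f g x a b H1 H2 Rmult_comm). Qed.
Lemma Dconst (c x : R) : is_derive (fun _ => c) x 0.
Proof. exact (is_derive_const c x). Qed.
Lemma Dcomp (f g : R -> R) (x a b : R) : is_derive f (g x) a -> is_derive g x b -> is_derive (fun t => f (g t)) x (b * a).
Proof. intros H1 H2. exact (is_derive_comp f g x a b H1 H2). Qed.
Lemma Dext (f g : R -> R) (x a b : R) : is_derive f x a -> a = b -> (forall t, f t = g t) -> is_derive g x b.
Proof. intros H Hab E. subst b. exact (is_derive_ext f g x a E H). Qed.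
Lemma Dshift (f : R -> R) (x a c : R) : is_derive f (x + c) a -> is_derive (fun t => f (t + c)) x a.
Proof. intro H. apply (Dext (fun t => f (t+c)) _ x (1 * a)); [|ring|reflexivity].
 apply (Dcomp f (fun t => t + c)); auto.
 apply (Dext (fun t => t + c) _ x (1 + 0)); [|ring|reflexivity]. apply Dplus.
 exact (is_derive_id x). apply Dconst. Qed.

Lemma Cplus (f g : R -> R) (x : R) : continuous f x -> continuous g x -> continuous (fun t => f t + g t) x.
Proof. intros; apply (continuous_plus f g); auto. Qed.
Lemma Cminus (f g : R -> R) (x : R) : continuous f x -> continuous g x -> continuous (fun t => f t - g t) x.
Proof. intros; apply (continuous_minus f g); auto. Qed.
Lemma Cmult (f g : R -> R) (x : R) : continuous f x -> continuous g x -> continuous (fun t => f t * g t) x.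
Proof. intros; apply (continuous_mult f g); auto. Qed.
Lemma Copp (f : R -> R) (x : R) : continuous f x -> continuous (fun t => - f t) x.
Proof. intros; apply (continuous_opp f); auto. Qed.
Lemma Cconst (c x : R) : continuous (fun _ => c) x.
Proof. apply continuous_const. Qed.
Lemma Ccomp (f g : R -> R) (x : R) : continuous g x -> continuous f (g x) -> continuous (fun t => f (g t)) x.
Proof. intros; apply (continuous_comp g f); auto. Qed.
Lemma Cder (f : R -> R) (x a : R) : is_derive f x a -> continuous f x.
Proof. intro H. apply (ex_derive_continuous (V:=R_NormedModule)). exists a; exact H. Qed.
Lemma Ccos x : continuous cos x. Proof. apply (Cder _ _ _ (is_derive_cos x)). Qed.
Lemma Csin x : continuous sin x. Proof. apply (Cder _ _ _ (is_derive_sin x)). Qed.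
Lemma Cexp x : continuous exp x. Proof. apply (Cder _ _ _ (is_derive_exp x)). Qed.
Lemma Cext (f g : R -> R) (x : R) : (forall t, f t = g t) -> continuous f x -> continuous g x.
Proof. intros E H. exact (continuous_ext f g x E H). Qed.
Lemma Cpt (f : R -> R) (x : R) : continuous f x -> continuity_pt f x.
Proof. intro H. apply continuity_pt_filterlim. exact H. Qed.

Lemma Did (x : R) : is_derive (fun t => t) x 1.
Proof. exact (is_derive_id x). Qed.

Lemma Dlin (c x : R) : is_derive (fun s => -(c*s)) x (-c).
Proof.
  apply (Dext (fun s => 0 - (fun _ => c) s * (fun t => t) s) _ x (0 - (0 * x + c * 1))); [| ring | intro; simpl; ring].
  apply Dminus. apply Dconst. apply Dmult. apply Dconst. apply Did.
Qed.

Lemma loc_open (f g : R -> R) (x y s : R) : x < s < y -> (forall r, x < r < y -> f r = g r) ->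
  locally s (fun r => g r = f r).
Proof.
  intros Hs E.
  assert (Hpos : 0 < Rmin (s - x) (y - s)) by (apply Rmin_pos; lra).
  exists (mkposreal _ Hpos). intros r Hr.
  change (Rabs (r - s) < Rmin (s - x) (y - s)) in Hr.
  apply Rabs_def2 in Hr. destruct Hr as [H1 H2].
  assert (Rmin (s - x) (y - s) <= s - x) by apply Rmin_l.
  assert (Rmin (s - x) (y - s) <= y - s) by apply Rmin_r.
  symmetry; apply E; lra.
Qed.

Lemma pc_piece (beta : R -> R) (a b : R) : piecewise_continuous beta -> a < b ->
  exists (m : nat) (t : nat -> R), t O = a /\ t m = b /\
    (forall k, (k < m)%nat -> t k < t (S k)) /\
    (forall k, (k < m)%nat -> exists g : R -> R, (forall s, continuous g s) /\
        (forall s, t k < s < t (S k) -> g s = beta s) /\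
        (forall s, t k < s < t (S k) -> continuous beta s)).
Proof.
  intros Hpc Hab. destruct (Hpc a b Hab) as [m [t [H0 [Hm [Hinc Hg]]]]].
  exists m, t. repeat split; auto.
  intros k Hk. destruct (Hg k Hk) as [g [Gc Ge]]. exists g. repeat split; auto.
  intros s Hs. apply (continuous_ext_loc _ g). apply (loc_open beta g (t k) (t (S k))); auto.
  intros r Hr; symmetry; apply Ge; auto.
  apply Gc.
Qed.

Lemma const_lemma (beta F : R -> R) : piecewise_continuous beta -> (forall x, continuous F x) ->
  (forall s, continuous beta s -> is_derive F s 0) -> forall T, 0 <= T -> F T = F 0.
Proof.
  intros Hpc Fc Fd T HT. destruct (Req_dec T 0) as [->|HT0]; [reflexivity|].
  destruct (pc_piece beta 0 T Hpc ltac:(lra)) as [m [t [H0 [Hm [Hinc Hg]]]]].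
  assert (forall k, (k <= m)%nat -> F (t k) = F 0).
  { induction k; intros Hk. rewrite H0; reflexivity.
    rewrite <- IHk by lia. assert (Hk' : (k < m)%nat) by lia.
    destruct (Hg k Hk') as [g [_ [_ Bc]]]. specialize (Hinc k Hk').
    destruct (MVT_gen F (t k) (t (S k)) (fun _ => 0)) as [c [_ Hc]].
    - intros x Hx. rewrite Rmin_left in Hx by lra. rewrite Rmax_right in Hx by lra.
      apply Fd, Bc; lra.
    - intros x _. apply Cpt, Fc.
    - lra. }
  rewrite <- Hm. apply H; lia.
Qed.

Lemma osc_unique (beta a b : R -> R) : piecewise_continuous beta ->
  (forall x, continuous a x) -> (forall x, continuous b x) ->
  (forall s, continuous beta s -> is_derive a s (b s) /\ is_derive b s (-(beta s * beta s) * a s)) ->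
  a 0 = 0 -> b 0 = 0 -> forall T, 0 <= T -> a T = 0 /\ b T = 0.
Proof.
  intros Hpc Ac Bc Hd Ha0 Hb0 T HT. destruct (Req_dec T 0) as [->|HT0]; [auto|].
  destruct (pc_piece beta 0 T Hpc ltac:(lra)) as [m [t [H0 [Hm [Hinc Hg]]]]].
  assert (forall k, (k <= m)%nat -> a (t k) = 0 /\ b (t k) = 0).
  { induction k; intros Hk. rewrite H0; auto.
    assert (Hk' : (k < m)%nat) by lia. destruct (IHk ltac:(lia)) as [IA IB].
    destruct (Hg k Hk') as [g [Gc [Ge Bec]]]. specialize (Hinc k Hk').
    set (x := t k) in *. set (y := t (S k)) in *.
    destruct (continuity_ab_maj (fun s => g s * g s) x y ltac:(lra)) as [Mx [HM _]].
    { intros c _. apply Cpt, Cmult; apply Gc. }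
    set (K := g Mx * g Mx) in *. set (c := 1 + K).
    set (E := fun s => (a s * a s + b s * b s) * exp (-(c*s))).
    set (dE := fun s => (2*a s*b s - 2*(g s*g s)*a s*b s - c*(a s*a s+b s*b s)) * exp(-(c*s))).
    destruct (MVT_gen E x y dE) as [xi [Hxi HE]].
    - intros s Hs. rewrite Rmin_left in Hs by lra. rewrite Rmax_right in Hs by lra.
      destruct (Hd s (Bec s Hs)) as [Da Db].
      assert (Hge : g s = beta s) by (apply Ge; auto).
      unfold E, dE.
      apply (Dext (fun s => (fun s => (fun s => a s * a s) s + (fun s => b s * b s) s) s * (fun s => exp (-(c*s))) s) _ s
         (((b s * a s + a s * b s) + ((-(beta s * beta s) * a s) * b s + b s * (-(beta s * beta s) * a s))) * exp (-(c*s))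
          + (a s * a s + b s * b s) * ((-c) * exp (-(c*s))))).
      + apply (Dmult (fun s => a s * a s + b s * b s) (fun s => exp (-(c*s)))).
        apply (Dplus (fun s => a s * a s) (fun s => b s * b s)).
        apply (Dmult a a); auto. apply (Dmult b b); auto.
        apply (Dcomp exp (fun s => -(c*s))). apply is_derive_exp. apply Dlin.
      + rewrite Hge. ring.
      + reflexivity.
    - intros s _. apply Cpt. unfold E. apply Cmult. apply Cplus; apply Cmult; auto.
      apply (Ccomp exp (fun s => -(c*s))). apply (Cder _ _ _ (Dlin c s)). apply Cexp.
    - assert (Ex : E x = 0) by (unfold E; rewrite IA, IB; ring).
      rewrite Ex in HE. rewrite Rmin_left in Hxi by lra. rewrite Rmax_right in Hxi by lra.
      assert (HMxi := HM xi Hxi). fold K in HMxi.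
      assert (dE xi <= 0).
      { unfold dE. set (A := a xi) in *. set (B := b xi) in *. set (G := g xi) in *.
        assert (0 < exp (-(c*xi))) by apply exp_pos.
        apply Rmult_le_0_r; [|lra].
        assert (0 <= (A - B)*(A-B) + G*G*((A+B)*(A+B))) by (apply Rplus_le_le_0_compat; [apply Rle_0_sqr| apply Rmult_le_pos; [apply Rle_0_sqr| apply Rle_0_sqr]]).
        assert (0 <= A*A + B*B) by (apply Rplus_le_le_0_compat; apply Rle_0_sqr).
        unfold c. nra. }
      assert (Hey : E y <= 0) by nra.
      assert (0 < exp (-(c*y))) by apply exp_pos.
      unfold E in Hey.
      assert (a y * a y + b y * b y <= 0) by nra.
      assert (0 <= a y * a y) by apply Rle_0_sqr. assert (0 <= b y * b y) by apply Rle_0_sqr.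
      split; nra. }
  rewrite <- Hm. apply H; lia.
Qed.

Lemma beta_int (beta : R -> R) : piecewise_continuous beta -> forall a b, ex_RInt beta a b.
Proof.
  intros Hpc.
  assert (Hlt : forall a b, a < b -> ex_RInt beta a b).
  { intros a b Hab. destruct (pc_piece beta a b Hpc Hab) as [m [t [H0 [Hm [Hinc Hg]]]]].
    assert (forall k, (k <= m)%nat -> ex_RInt beta a (t k)).
    { induction k; intros Hk. rewrite H0; apply ex_RInt_point.
      assert (Hk' : (k < m)%nat) by lia.
      destruct (Hg k Hk') as [g [Gc [Ge _]]]. specialize (Hinc k Hk').
      apply (ex_RInt_Chasles _ _ (t k)). apply IHk; lia.
      apply (ex_RInt_ext g). intros x Hx. rewrite Rmin_left in Hx by lra. rewrite Rmax_right in Hx by lra. auto.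
      apply (ex_RInt_continuous (V:=R_CompleteNormedModule)). intros; apply Gc. }
    rewrite <- Hm; apply H; lia. }
  intros a b. destruct (Rtotal_order a b) as [H|[H|H]].
  - auto.
  - subst; apply ex_RInt_point.
  - apply ex_RInt_swap; auto.
Qed.

Lemma phi_cont (beta : R -> R) : piecewise_continuous beta -> forall x, continuous (fun t => RInt beta 0 t) x.
Proof.
  intros Hpc x. apply (continuous_RInt_1 beta 0 x).
  apply filter_forall. intro z. apply (RInt_correct (V:=R_CompleteNormedModule)). apply beta_int; auto.
Qed.

Lemma phi_der (beta : R -> R) : piecewise_continuous beta -> forall s, continuous beta s ->
  is_derive (fun t => RInt beta 0 t) s (beta s).
Proof.
  intros Hpc s Hs. apply (is_derive_RInt beta (fun t => RInt beta 0 t) 0 s); auto.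
  apply filter_forall. intro z. apply (RInt_correct (V:=R_CompleteNormedModule)). apply beta_int; auto.
Qed.

Lemma Amat_cont (beta : R -> R) s i k : continuous beta s -> continuous (fun x => Amat (beta x) i k) s.
Proof.
  intro Hb.
  destruct i as [|[|[|[|i]]]]; destruct k as [|[|[|[|k]]]]; simpl;
  first [ apply Cconst | exact Hb | apply Copp; exact Hb
        | apply Copp; apply (Cmult beta beta); exact Hb ].
Qed.

Lemma u_cont (beta : R -> R) (u : R -> mat4) : evolution_matrix beta u ->
  forall i j x, (i < 4)%nat -> (j < 4)%nat -> continuous (fun t => u t i j) x.
Proof.
  intros Hev i j x Hi Hj.
  apply (Cext (fun t => (u t i j - (if Nat.eqb i j then 1 else 0)) + (if Nat.eqb i j then 1 else 0))).
  intro; ring.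
  apply (Cplus (fun t => u t i j - (if Nat.eqb i j then 1 else 0))). 2: apply Cconst.
  apply (continuous_RInt_1 (fun s => mulA (beta s) (u s) i j) 0 x).
  apply filter_forall. intro z. apply Hev; auto.
Qed.

Lemma u_der (beta : R -> R) (u : R -> mat4) : evolution_matrix beta u ->
  forall i j s, (i < 4)%nat -> (j < 4)%nat -> continuous beta s ->
  is_derive (fun t => u t i j) s (mulA (beta s) (u s) i j).
Proof.
  intros Hev i j s Hi Hj Hb.
  apply (Dext (fun t => (u t i j - (if Nat.eqb i j then 1 else 0)) + (if Nat.eqb i j then 1 else 0)) _ s
     (mulA (beta s) (u s) i j + 0)); [| ring | intro; ring].
  apply Dplus; [| apply Dconst].
  apply (is_derive_RInt (fun s => mulA (beta s) (u s) i j) _ 0 s).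
  apply filter_forall. intro z. apply Hev; auto.
  unfold mulA.
  assert (forall k, (k < 4)%nat -> continuous (fun x => Amat (beta x) i k * u x k j) s).
  { intros k Hk. apply (Cmult (fun x => Amat (beta x) i k)). apply Amat_cont; auto.
    apply (u_cont beta); auto. }
  repeat apply Cplus; apply H; lia.
Qed.

Definition Osc (beta a b : R -> R) : Prop := (forall x, continuous a x) /\ (forall x, continuous b x) /\
  (forall s, continuous beta s -> is_derive a s (b s) /\ is_derive b s (-(beta s*beta s) * a s)).

Lemma Osc_unique (beta a b : R -> R) : piecewise_continuous beta -> Osc beta a b ->
  a 0 = 0 -> b 0 = 0 -> forall T, 0 <= T -> a T = 0 /\ b T = 0.
Proof. intros Hpc [A [B D]]. apply (osc_unique beta); auto. Qed.

Lemma Osc_comb (beta a1 b1 a2 b2 : R -> R) (p q : R) : Osc beta a1 b1 -> Osc beta a2 b2 ->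
  Osc beta (fun t => p * a1 t + q * a2 t) (fun t => p * b1 t + q * b2 t).
Proof.
  intros [A1 [B1 D1]] [A2 [B2 D2]]. split; [|split].
  - intro x. apply (Cplus (fun t => p * a1 t)); [apply (Cmult (fun _ => p)) | apply (Cmult (fun _ => q))]; auto; apply Cconst.
  - intro x. apply (Cplus (fun t => p * b1 t)); [apply (Cmult (fun _ => p)) | apply (Cmult (fun _ => q))]; auto; apply Cconst.
  - intros s Hs. destruct (D1 s Hs) as [Da1 Db1]. destruct (D2 s Hs) as [Da2 Db2]. split.
    + eapply Dext. apply (Dplus (fun t => p * a1 t) (fun t => q * a2 t)).
      apply (Dmult (fun _ => p)). apply Dconst. exact Da1.
      apply (Dmult (fun _ => q)). apply Dconst. exact Da2. ring. reflexivity.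
    + eapply Dext. apply (Dplus (fun t => p * b1 t) (fun t => q * b2 t)).
      apply (Dmult (fun _ => p)). apply Dconst. exact Db1.
      apply (Dmult (fun _ => q)). apply Dconst. exact Db2. ring. reflexivity.
Qed.

Lemma Osc_ext (beta a b a' b' : R -> R) : (forall t, a t = a' t) -> (forall t, b t = b' t) ->
  Osc beta a b -> Osc beta a' b'.
Proof.
  intros Ea Eb [A [B D]]. split; [|split].
  - intro x; apply (Cext a); auto.
  - intro x; apply (Cext b); auto.
  - intros s Hs. destruct (D s Hs) as [Da Db]. split.
    + apply (Dext a _ s (b s)); auto.
    + apply (Dext b _ s (-(beta s * beta s) * a s)); auto. rewrite Ea; auto.
Qed.

Lemma beta_shift_cont (beta : R -> R) : (forall t, beta (t + 1) = beta t) ->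
  forall s : R, continuous beta s -> continuous beta (s + 1).
Proof.
  intros Hp s Hs. apply (Cext (fun x => beta (x - 1))).
  intro t. replace t with ((t - 1) + 1) at 2 by ring. rewrite Hp; reflexivity.
  apply (Ccomp beta (fun x => x - 1)). apply (Cminus (fun x => x)). apply continuous_id. apply Cconst.
  replace (s + 1 - 1) with s by ring. exact Hs.
Qed.

Lemma Osc_shift (beta a b : R -> R) : (forall t, beta (t + 1) = beta t) -> Osc beta a b ->
  Osc beta (fun t => a (t + 1)) (fun t => b (t + 1)).
Proof.
  intros Hp [A [B D]]. split; [|split].
  - intro x. apply (Ccomp a (fun t => t + 1)). apply (Cplus (fun t => t)). apply continuous_id. apply Cconst. apply A.
  - intro x. apply (Ccomp b (fun t => t + 1)). apply (Cplus (fun t => t)). apply continuous_id. apply Cconst. apply B.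
  - intros s Hs. destruct (D (s + 1) (beta_shift_cont beta Hp s Hs)) as [Da Db]. split.
    + apply Dshift; auto.
    + apply Dshift. rewrite Hp in Db. exact Db.
Qed.

Definition ph (beta : R -> R) (t : R) : R := RInt beta 0 t.
Definition Wa beta (u : R -> mat4) j t := cos (ph beta t) * u t 0%nat j - sin (ph beta t) * u t 1%nat j.
Definition Wb beta (u : R -> mat4) j t := sin (ph beta t) * u t 0%nat j + cos (ph beta t) * u t 1%nat j.
Definition Wc beta (u : R -> mat4) j t := cos (ph beta t) * u t 2%nat j - sin (ph beta t) * u t 3%nat j.
Definition Wd beta (u : R -> mat4) j t := sin (ph beta t) * u t 2%nat j + cos (ph beta t) * u t 3%nat j.

Lemma cos_ph_cont beta : piecewise_continuous beta -> forall x, continuous (fun t => cos (ph beta t)) x.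
Proof. intros Hpc x. apply (Ccomp cos (ph beta)). apply phi_cont; auto. apply Ccos. Qed.
Lemma sin_ph_cont beta : piecewise_continuous beta -> forall x, continuous (fun t => sin (ph beta t)) x.
Proof. intros Hpc x. apply (Ccomp sin (ph beta)). apply phi_cont; auto. apply Csin. Qed.
Lemma cos_ph_der beta : piecewise_continuous beta -> forall s, continuous beta s ->
  is_derive (fun t => cos (ph beta t)) s (beta s * - sin (ph beta s)).
Proof. intros Hpc s Hs. apply (Dcomp cos (ph beta)). apply is_derive_cos. apply phi_der; auto. Qed.
Lemma sin_ph_der beta : piecewise_continuous beta -> forall s, continuous beta s ->
  is_derive (fun t => sin (ph beta t)) s (beta s * cos (ph beta s)).
Proof. intros Hpc s Hs. apply (Dcomp sin (ph beta)). apply is_derive_sin. apply phi_der; auto. Qed.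

Lemma W_osc beta u : piecewise_continuous beta -> evolution_matrix beta u -> forall j, (j < 4)%nat ->
  Osc beta (Wa beta u j) (Wc beta u j) /\ Osc beta (Wb beta u j) (Wd beta u j).
Proof.
  intros Hpc Hev j Hj.
  assert (UC : forall i x, (i < 4)%nat -> continuous (fun t => u t i j) x) by (intros; apply (u_cont beta); auto).
  assert (CC := cos_ph_cont beta Hpc). assert (SC := sin_ph_cont beta Hpc).
  assert (UD : forall i s, (i < 4)%nat -> continuous beta s -> is_derive (fun t => u t i j) s (mulA (beta s) (u s) i j))
    by (intros; apply (u_der beta); auto).
  assert (CD := cos_ph_der beta Hpc). assert (SD := sin_ph_der beta Hpc).
  assert (U0 : forall x, continuous (fun t => u t 0%nat j) x) by (intro; apply UC; lia).
  assert (U1 : forall x, continuous (fun t => u t 1%nat j) x) by (intro; apply UC; lia).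
  assert (U2 : forall x, continuous (fun t => u t 2%nat j) x) by (intro; apply UC; lia).
  assert (U3 : forall x, continuous (fun t => u t 3%nat j) x) by (intro; apply UC; lia).
  assert (D0 : forall s, continuous beta s -> is_derive (fun t => u t 0%nat j) s (mulA (beta s) (u s) 0%nat j)) by (intros; apply UD; auto; lia).
  assert (D1 : forall s, continuous beta s -> is_derive (fun t => u t 1%nat j) s (mulA (beta s) (u s) 1%nat j)) by (intros; apply UD; auto; lia).
  assert (D2 : forall s, continuous beta s -> is_derive (fun t => u t 2%nat j) s (mulA (beta s) (u s) 2%nat j)) by (intros; apply UD; auto; lia).
  assert (D3 : forall s, continuous beta s -> is_derive (fun t => u t 3%nat j) s (mulA (beta s) (u s) 3%nat j)) by (intros; apply UD; auto; lia).
  clear UC UD.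
  split; split; try split.
  - intros. unfold Wa. apply (Cminus (fun t => cos (ph beta t) * u t 0%nat j)); [apply (Cmult (fun t => cos (ph beta t))) | apply (Cmult (fun t => sin (ph beta t)))]; auto.
  - intros. unfold Wc. apply (Cminus (fun t => cos (ph beta t) * u t 2%nat j)); [apply (Cmult (fun t => cos (ph beta t))) | apply (Cmult (fun t => sin (ph beta t)))]; auto.
  - intros s Hs. split.
    + eapply Dext. unfold Wa. apply (Dminus (fun t => cos (ph beta t) * u t 0%nat j) (fun t => sin (ph beta t) * u t 1%nat j)); [apply (Dmult (fun t => cos (ph beta t))) | apply (Dmult (fun t => sin (ph beta t)))]; auto.
      unfold mulA, Wc; simpl. ring. reflexivity.
    + eapply Dext. unfold Wc. apply (Dminus (fun t => cos (ph beta t) * u t 2%nat j) (fun t => sin (ph beta t) * u t 3%nat j)); [apply (Dmult (fun t => cos (ph beta t))) | apply (Dmult (fun t => sin (ph beta t)))]; auto.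
      unfold mulA, Wa; simpl. ring. reflexivity.
  - intros. unfold Wb. apply (Cplus (fun t => sin (ph beta t) * u t 0%nat j)); [apply (Cmult (fun t => sin (ph beta t))) | apply (Cmult (fun t => cos (ph beta t)))]; auto.
  - intros. unfold Wd. apply (Cplus (fun t => sin (ph beta t) * u t 2%nat j)); [apply (Cmult (fun t => sin (ph beta t))) | apply (Cmult (fun t => cos (ph beta t)))]; auto.
  - intros s Hs. split.
    + eapply Dext. unfold Wb. apply (Dplus (fun t => sin (ph beta t) * u t 0%nat j) (fun t => cos (ph beta t) * u t 1%nat j)); [apply (Dmult (fun t => sin (ph beta t))) | apply (Dmult (fun t => cos (ph beta t)))]; auto.
      unfold mulA, Wd; simpl. ring. reflexivity.
    + eapply Dext. unfold Wd. apply (Dplus (fun t => sin (ph beta t) * u t 2%nat j) (fun t => cos (ph beta t) * u t 3%nat j)); [apply (Dmult (fun t => sin (ph beta t))) | apply (Dmult (fun t => cos (ph beta t)))]; auto.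
      unfold mulA, Wb; simpl. ring. reflexivity.
Qed.

Fixpoint sumn (f : nat -> R) (k : nat) : R := match k with O => 0 | S k => sumn f k + f k end.

Lemma sumn_ext (f g : nat -> R) n : (forall k, (k < n)%nat -> f k = g k) -> sumn f n = sumn g n.
Proof. induction n; intros H; simpl; auto. rewrite IHn by (intros; apply H; lia). rewrite H by lia. reflexivity. Qed.

Lemma sumn_lin4 (f1 f2 f3 f4 : nat -> R) (p1 p2 p3 p4 : R) n :
  sumn (fun k => p1 * f1 k + p2 * f2 k + p3 * f3 k + p4 * f4 k) n =
  p1 * sumn f1 n + p2 * sumn f2 n + p3 * sumn f3 n + p4 * sumn f4 n.
Proof. induction n; simpl. ring. rewrite IHn. ring. Qed.

Lemma sumn_cont (f : R -> R) n : (forall x, continuous f x) ->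
  forall x, continuous (fun t => sumn (fun k => f (t + INR k)) n) x.
Proof.
  intros Hf x. induction n; simpl.
  - apply Cconst.
  - apply (Cplus (fun t => sumn (fun k => f (t + INR k)) n)); auto.
    apply (Ccomp f (fun t => t + INR n)). apply (Cplus (fun t => t)). apply continuous_id. apply Cconst. apply Hf.
Qed.

Lemma int_periodic_sum (f : R -> R) n : (forall x, continuous f x) ->
  is_RInt f 0 (INR n) (RInt (fun t => sumn (fun k => f (t + INR k)) n) 0 1).
Proof.
  intros Hf. induction n.
  - simpl. replace (RInt (fun _ : R => 0) 0 1) with 0.
    apply (is_RInt_point (V:=R_NormedModule)).
    rewrite RInt_const. unfold scal; simpl. unfold mult; simpl. ring.
  - assert (E1 : ex_RInt (fun t => sumn (fun k => f (t + INR k)) n) 0 1).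
    { apply (ex_RInt_continuous (V:=R_CompleteNormedModule)). intros; apply sumn_cont; auto. }
    assert (E2 : ex_RInt (fun t => f (t + INR n)) 0 1).
    { apply (ex_RInt_continuous (V:=R_CompleteNormedModule)). intros.
      apply (Ccomp f (fun t => t + INR n)). apply (Cplus (fun t => t)). apply continuous_id. apply Cconst. apply Hf. }
    cbn [sumn].
    assert (Ep : RInt (fun t => sumn (fun k => f (t + INR k)) n + f (t + INR n)) 0 1 =
                 RInt (fun t => sumn (fun k => f (t + INR k)) n) 0 1 + RInt (fun t => f (t + INR n)) 0 1)
      by exact (RInt_plus (V:=R_CompleteNormedModule) _ _ 0 1 E1 E2).
    rewrite Ep. rewrite S_INR.
    apply (is_RInt_Chasles f 0 (INR n) (INR n + 1)). exact IHn.
    assert (Hint : is_RInt (fun t => f (t + INR n)) (1 * INR n + - INR n) (1 * (INR n + 1) + - INR n)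
                     (RInt (fun t => f (t + INR n)) 0 1)).
    { replace (1 * INR n + - INR n) with 0 by ring. replace (1 * (INR n + 1) + - INR n) with 1 by ring.
      exact (RInt_correct (V:=R_CompleteNormedModule) _ _ _ E2). }
    assert (H := is_RInt_comp_lin (fun t => f (t + INR n)) 1 (- INR n) (INR n) (INR n + 1) _ Hint).
    apply (is_RInt_ext _ f _ _ _ ) in H. exact H.
    intros x _. unfold scal; simpl. unfold mult; simpl. replace (1 * x + - INR n + INR n) with x by ring. ring.
Qed.

Record M2 := mk2 { a11 : R; a12 : R; a21 : R; a22 : R }.
Definition mm (X Y : M2) : M2 := mk2 (a11 X*a11 Y + a12 X*a21 Y) (a11 X * a12 Y + a12 X * a22 Y)
  (a21 X*a11 Y + a22 X*a21 Y) (a21 X*a12 Y + a22 X*a22 Y).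
Fixpoint pw (M : M2) (k : nat) : M2 := match k with O => mk2 1 0 0 1 | S k => mm (pw M k) M end.

Lemma pw_sum_zero (M : M2) (n : nat) : (1 <= n)%nat ->
  a11 M * a22 M - a12 M * a21 M = 1 ->
  pw M n = mk2 1 0 0 1 ->
  ~ (a11 M = 1 /\ a12 M = 0 /\ a21 M = 0 /\ a22 M = 1) ->
  sumn (fun k => a11 (pw M k)) n = 0 /\ sumn (fun k => a12 (pw M k)) n = 0 /\
  sumn (fun k => a21 (pw M k)) n = 0 /\ sumn (fun k => a22 (pw M k)) n = 0.
Proof.
  intros Hn Hdet Hpw Hne. destruct M as [a b c d]; simpl in *.
  set (S11 := fun k => sumn (fun k => a11 (pw (mk2 a b c d) k)) k).
  set (S12 := fun k => sumn (fun k => a12 (pw (mk2 a b c d) k)) k).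
  set (S21 := fun k => sumn (fun k => a21 (pw (mk2 a b c d) k)) k).
  set (S22 := fun k => sumn (fun k => a22 (pw (mk2 a b c d) k)) k).
  assert (Tel : forall k, S11 k * (1 - a) - S12 k * c = 1 - a11 (pw (mk2 a b c d) k) /\
                          - S11 k * b + S12 k * (1 - d) = - a12 (pw (mk2 a b c d) k) /\
                          S21 k * (1 - a) - S22 k * c = - a21 (pw (mk2 a b c d) k) /\
                          - S21 k * b + S22 k * (1 - d) = 1 - a22 (pw (mk2 a b c d) k)).
  { induction k; unfold S11, S12, S21, S22 in *; simpl.
    - repeat split; ring.
    - destruct (pw (mk2 a b c d) k) as [p q r s]; simpl in *. destruct IHk as [I1 [I2 [I3 I4]]].
      repeat split; lra. }
  destruct (Tel n) as [T1 [T2 [T3 T4]]]. rewrite Hpw in T1, T2, T3, T4. simpl in T1, T2, T3, T4.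
  fold (S11 n) (S12 n) (S21 n) (S22 n).
  set (x11 := S11 n) in *. set (x12 := S12 n) in *. set (x21 := S21 n) in *. set (x22 := S22 n) in *.
  set (D := (1 - a) * (1 - d) - b * c).
  destruct (Req_dec D 0) as [HD|HD].
  - exfalso. apply Hne.
    assert (Htr : d = 2 - a) by (unfold D in HD; lra).
    assert (Hbc : (a - 1) * (a - 1) + b * c = 0) by (subst d; nra).
    assert (Hp : forall k, pw (mk2 a b c d) k = mk2 (1 + INR k * (a - 1)) (INR k * b) (INR k * c) (1 + INR k * (d - 1))).
    { induction k. simpl. f_equal; ring.
      cbn [pw]. rewrite S_INR, IHk. unfold mm. cbn [a11 a12 a21 a22]. subst d. f_equal.
      - replace ((1 + INR k * (a - 1)) * a + INR k * b * c) with (1 + (INR k + 1) * (a - 1) + INR k * ((a-1)*(a-1) + b*c)) by ring.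
        rewrite Hbc; ring.
      - ring. - ring.
      - replace (INR k * c * b + (1 + INR k * (2 - a - 1)) * (2 - a)) with (1 + (INR k + 1) * (2 - a - 1) + INR k * ((a-1)*(a-1) + b*c)) by ring.
        rewrite Hbc; ring. }
    rewrite Hp in Hpw. injection Hpw as E1 E2 E3 E4.
    assert (Hpos : INR n <> 0) by (apply not_0_INR; lia).
    repeat split.
    + assert (INR n * (a - 1) = 0) by lra. destruct (Rmult_integral _ _ H); lra.
    + destruct (Rmult_integral _ _ E2); lra.
    + destruct (Rmult_integral _ _ E3); lra.
    + assert (INR n * (d - 1) = 0) by lra. destruct (Rmult_integral _ _ H); lra.
  - assert (E11 : x11 * D = 0).
    { replace (x11 * D) with ((x11 * (1 - a) - x12 * c) * (1 - d) + (- x11 * b + x12 * (1 - d)) * c) by (unfold D; ring).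
      rewrite T1, T2. ring. }
    assert (E12 : x12 * D = 0).
    { replace (x12 * D) with ((x11 * (1 - a) - x12 * c) * b + (- x11 * b + x12 * (1 - d)) * (1 - a)) by (unfold D; ring).
      rewrite T1, T2. ring. }
    assert (E21 : x21 * D = 0).
    { replace (x21 * D) with ((x21 * (1 - a) - x22 * c) * (1 - d) + (- x21 * b + x22 * (1 - d)) * c) by (unfold D; ring).
      rewrite T3, T4. ring. }
    assert (E22 : x22 * D = 0).
    { replace (x22 * D) with ((x21 * (1 - a) - x22 * c) * b + (- x21 * b + x22 * (1 - d)) * (1 - a)) by (unfold D; ring).
      rewrite T3, T4. ring. }
    repeat split; [destruct (Rmult_integral _ _ E11) | destruct (Rmult_integral _ _ E12)
                  | destruct (Rmult_integral _ _ E21) | destruct (Rmult_integral _ _ E22)]; auto; contradiction.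
Qed.

Theorem proposition3 (beta : R -> R) (u : R -> mat4) (n : nat) :
  piecewise_continuous beta ->
  (forall t, beta (t + 1) = beta t) ->
  (forall k : Z, beta (IZR k) = 0) ->
  is_RInt beta 0 1 0 ->
  evolution_matrix beta u ->
  (1 < n)%nat ->
  is_id4 (u (INR n)) ->
  (forall j : nat, (1 <= j < n)%nat -> ~ is_id4 (u (INR j))) ->
  forall (z : nat -> R) (i : nat), (i < 2)%nat -> loop_center u n z i = 0.
Proof.
  intros Hpc Hper _ Hint Hev Hn Hun Hnot z i Hi.
  assert (U0 : forall i j, (i < 4)%nat -> (j < 4)%nat -> u 0 i j = if Nat.eqb i j then 1 else 0).
  { intros i0 j0 Hi0 Hj0. assert (H := Hev 0 i0 j0 Hi0 Hj0).
    assert (H1 := is_RInt_unique (V:=R_CompleteNormedModule) _ _ _ _ H).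
    rewrite (RInt_point (V:=R_CompleteNormedModule)) in H1. unfold zero in H1; simpl in H1. lra. }
  assert (ph0 : ph beta 0 = 0).
  { unfold ph. rewrite (RInt_point (V:=R_CompleteNormedModule)). reflexivity. }
  assert (ph1 : ph beta 1 = 0).
  { unfold ph. exact (is_RInt_unique (V:=R_CompleteNormedModule) _ _ _ _ Hint). }
  assert (phper : forall T, 0 <= T -> ph beta (T + 1) = ph beta T).
  { intros T HT.
    assert (H := const_lemma beta (fun t => ph beta (t + 1) - ph beta t) Hpc).
    simpl in H. rewrite Rplus_0_l, ph1, ph0 in H.
    assert (ph beta (T + 1) - ph beta T = 0); [|lra].
    replace 0 with (0 - 0) by ring. apply H; auto.
    - intro x. apply (Cminus (fun t => ph beta (t + 1))).
      apply (Ccomp (ph beta) (fun t => t + 1)). apply (Cplus (fun t => t)). apply continuous_id. apply Cconst.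
      apply phi_cont; auto. apply phi_cont; auto.
    - intros s Hs. apply (Dext (fun t => ph beta (t + 1) - ph beta t) _ s (beta (s + 1) - beta s)).
      apply (Dminus (fun t => ph beta (t + 1))). apply Dshift. apply phi_der; auto.
      apply beta_shift_cont; auto. apply phi_der; auto.
      rewrite Hper; ring. reflexivity. }
  assert (phk : forall k T, 0 <= T -> ph beta (T + INR k) = ph beta T).
  { induction k; intros T HT. simpl. rewrite Rplus_0_r. reflexivity.
    rewrite S_INR. replace (T + (INR k + 1)) with ((T + INR k) + 1) by ring.
    rewrite phper. apply IHk; auto. assert (0 <= INR k) by apply pos_INR. lra. }
  assert (WO := W_osc beta u Hpc Hev).
  destruct (WO 0%nat ltac:(lia)) as [O0ac O0bd].
  destruct (WO 1%nat ltac:(lia)) as [O1ac O1bd].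
  destruct (WO 2%nat ltac:(lia)) as [O2ac O2bd].
  destruct (WO 3%nat ltac:(lia)) as [O3ac O3bd].
  assert (Wat0 : forall j, (j < 4)%nat -> Wa beta u j 0 = u 0 0%nat j /\ Wb beta u j 0 = u 0 1%nat j /\
                  Wc beta u j 0 = u 0 2%nat j /\ Wd beta u j 0 = u 0 3%nat j).
  { intros j Hj. unfold Wa, Wb, Wc, Wd. rewrite ph0, cos_0, sin_0. repeat split; ring. }
  assert (Uv : forall i j, (i < 4)%nat -> (j < 4)%nat -> u 0 i j = if Nat.eqb i j then 1 else 0) by exact U0.
  destruct (Wat0 0%nat ltac:(lia)) as [Wa00 [Wb00 [Wc00 Wd00]]].
  destruct (Wat0 1%nat ltac:(lia)) as [Wa10 [Wb10 [Wc10 Wd10]]].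
  destruct (Wat0 2%nat ltac:(lia)) as [Wa20 [Wb20 [Wc20 Wd20]]].
  destruct (Wat0 3%nat ltac:(lia)) as [Wa30 [Wb30 [Wc30 Wd30]]].
  rewrite !U0 in Wa00, Wb00, Wc00, Wd00, Wa10, Wb10, Wc10, Wd10, Wa20, Wb20, Wc20, Wd20, Wa30, Wb30, Wc30, Wd30 by lia.
  simpl in Wa00, Wb00, Wc00, Wd00, Wa10, Wb10, Wc10, Wd10, Wa20, Wb20, Wc20, Wd20, Wa30, Wb30, Wc30, Wd30.
  assert (S1 := Osc_unique beta _ _ Hpc O1ac Wa10 Wc10).
  assert (S3 := Osc_unique beta _ _ Hpc O3ac Wa30 Wc30).
  assert (S0 := Osc_unique beta _ _ Hpc O0bd Wb00 Wd00).
  assert (S2 := Osc_unique beta _ _ Hpc O2bd Wb20 Wd20).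
  assert (S10 := Osc_unique beta _ _ Hpc (Osc_comb beta _ _ _ _ 1 (-1) O1bd O0ac)
                   ltac:(cbv beta; rewrite Wb10, Wa00; ring) ltac:(cbv beta; rewrite Wd10, Wc00; ring)).
  assert (S32 := Osc_unique beta _ _ Hpc (Osc_comb beta _ _ _ _ 1 (-1) O3bd O2ac)
                   ltac:(cbv beta; rewrite Wb30, Wa20; ring) ltac:(cbv beta; rewrite Wd30, Wc20; ring)).
  simpl in S10, S32.
  set (m11 := Wa beta u 0%nat) in *. set (m12 := Wa beta u 2%nat) in *.
  set (m21 := Wc beta u 0%nat) in *. set (m22 := Wc beta u 2%nat) in *.
  set (M := mk2 (m11 1) (m12 1) (m21 1) (m22 1)).
  assert (Pa := Osc_unique beta _ _ Hpc (Osc_comb beta _ _ _ _ 1 (-1) (Osc_shift beta _ _ Hper O0ac)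
                  (Osc_comb beta _ _ _ _ (m11 1) (m21 1) O0ac O2ac))
                ltac:(cbv beta; rewrite Rplus_0_l, Wa00, Wa20; ring)
                ltac:(cbv beta; rewrite Rplus_0_l, Wc00, Wc20; ring)).
  assert (Pb := Osc_unique beta _ _ Hpc (Osc_comb beta _ _ _ _ 1 (-1) (Osc_shift beta _ _ Hper O2ac)
                  (Osc_comb beta _ _ _ _ (m12 1) (m22 1) O0ac O2ac))
                ltac:(cbv beta; rewrite Rplus_0_l, Wa00, Wa20; ring)
                ltac:(cbv beta; rewrite Rplus_0_l, Wc00, Wc20; ring)).
  assert (perk : forall k T, 0 <= T ->
    m11 (T + INR k) = m11 T * a11 (pw M k) + m12 T * a21 (pw M k) /\
    m12 (T + INR k) = m11 T * a12 (pw M k) + m12 T * a22 (pw M k) /\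
    m21 (T + INR k) = m21 T * a11 (pw M k) + m22 T * a21 (pw M k) /\
    m22 (T + INR k) = m21 T * a12 (pw M k) + m22 T * a22 (pw M k)).
  { induction k; intros T HT.
    - simpl. rewrite Rplus_0_r. repeat split; ring.
    - rewrite S_INR. replace (T + (INR k + 1)) with ((T + INR k) + 1) by ring.
      assert (HTk : 0 <= T + INR k) by (assert (0 <= INR k) by apply pos_INR; lra).
      destruct (Pa _ HTk) as [A1 A2]. destruct (Pb _ HTk) as [B1 B2].
      destruct (IHk T HT) as [I1 [I2 [I3 I4]]].
      cbn [pw]. unfold mm. destruct (pw M k) as [p q r s]. cbn [a11 a12 a21 a22] in *.
      unfold M in *; cbn [a11 a12 a21 a22] in *.
      rewrite I1, I2, I3, I4 in *.
      repeat split; lra. }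
  assert (Uinv : forall T j, u T 0%nat j = cos (ph beta T) * Wa beta u j T + sin (ph beta T) * Wb beta u j T /\
                              u T 1%nat j = - sin (ph beta T) * Wa beta u j T + cos (ph beta T) * Wb beta u j T /\
                              u T 2%nat j = cos (ph beta T) * Wc beta u j T + sin (ph beta T) * Wd beta u j T /\
                              u T 3%nat j = - sin (ph beta T) * Wc beta u j T + cos (ph beta T) * Wd beta u j T).
  { intros T j. unfold Wa, Wb, Wc, Wd. assert (H := sin2_cos2 (ph beta T)). unfold Rsqr in H.
    set (c := cos (ph beta T)) in *. set (sn := sin (ph beta T)) in *.
    repeat split;
    [ rewrite <- (Rmult_1_l (u T 0%nat j)) at 1
    | rewrite <- (Rmult_1_l (u T 1%nat j)) at 1
    | rewrite <- (Rmult_1_l (u T 2%nat j)) at 1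
    | rewrite <- (Rmult_1_l (u T 3%nat j)) at 1 ]; rewrite <- H; ring. }
  assert (Hdet : m11 1 * m22 1 - m12 1 * m21 1 = 1).
  { destruct O0ac as [C11 [C21 D1]]. destruct O2ac as [C12 [C22 D2]].
    assert (H := const_lemma beta (fun t => m11 t * m22 t - m12 t * m21 t) Hpc).
    cbv beta in H. rewrite H; [ rewrite Wa00, Wa20, Wc00, Wc20; ring | | | lra ].
    - intro x. apply (Cminus (fun t => m11 t * m22 t)); apply Cmult; auto.
    - intros s Hs. destruct (D1 s Hs) as [Da Db]. destruct (D2 s Hs) as [Dc Dd].
      apply (Dext (fun t => m11 t * m22 t - m12 t * m21 t) _ s
        ((m21 s * m22 s + m11 s * (-(beta s * beta s) * m12 s)) - (m22 s * m21 s + m12 s * (-(beta s * beta s) * m11 s)))).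
      apply (Dminus (fun t => m11 t * m22 t)); apply Dmult; auto. ring. reflexivity. }
  assert (phn : ph beta (INR n) = 0).
  { rewrite <- (Rplus_0_l (INR n)). rewrite phk; auto; lra. }
  assert (Hpwn : pw M n = mk2 1 0 0 1).
  { destruct (perk n 0 ltac:(lra)) as [A1 [A2 [A3 A4]]]. rewrite Rplus_0_l in A1, A2, A3, A4.
    rewrite Wa00, Wa20, Wc00, Wc20 in *.
    assert (V11 : m11 (INR n) = 1). { unfold m11, Wa. rewrite phn, cos_0, sin_0, !Hun by lia. simpl. ring. }
    assert (V12 : m12 (INR n) = 0). { unfold m12, Wa. rewrite phn, cos_0, sin_0, !Hun by lia. simpl. ring. }
    assert (V21 : m21 (INR n) = 0). { unfold m21, Wc. rewrite phn, cos_0, sin_0, !Hun by lia. simpl. ring. }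
    assert (V22 : m22 (INR n) = 1). { unfold m22, Wc. rewrite phn, cos_0, sin_0, !Hun by lia. simpl. ring. }
    destruct (pw M n) as [p q r t]. cbn [a11 a12 a21 a22] in *. f_equal; lra. }
  assert (HMne : ~ (a11 M = 1 /\ a12 M = 0 /\ a21 M = 0 /\ a22 M = 1)).
  { intros [E11 [E12 [E21 E22]]]. unfold M in *; cbn [a11 a12 a21 a22] in *.
    apply (Hnot 1%nat ltac:(lia)). change (INR 1) with 1.
    intros i0 j0 Hi0 Hj0.
    destruct (S1 1 ltac:(lra)) as [s1a s1c]. destruct (S3 1 ltac:(lra)) as [s3a s3c].
    destruct (S0 1 ltac:(lra)) as [s0b s0d]. destruct (S2 1 ltac:(lra)) as [s2b s2d].
    destruct (S10 1 ltac:(lra)) as [s10b s10d]. destruct (S32 1 ltac:(lra)) as [s32b s32d].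
    destruct (Uinv 1 j0) as [X0 [X1 [X2 X3]]]. rewrite ph1, cos_0, sin_0 in X0, X1, X2, X3.
    destruct i0 as [|[|[|[|i0]]]]; [rewrite X0 | rewrite X1 | rewrite X2 | rewrite X3 | lia];
    (destruct j0 as [|[|[|[|j0]]]]; [ | | | | lia]); simpl; fold m11 m12 m21 m22; lra. }
  destruct (pw_sum_zero M n ltac:(lia) ltac:(unfold M; cbn [a11 a12 a21 a22]; exact Hdet) Hpwn HMne)
    as [Z11 [Z12 [Z21 Z22]]].
  assert (Final : forall (X p q : R -> R), (forall x, continuous X x) ->
     (forall T, 0 <= T -> X T = p (ph beta T) * (m11 T * z 0%nat + m12 T * z 2%nat) + q (ph beta T) * (m11 T * z 1%nat + m12 T * z 3%nat)) ->
     RInt X 0 (INR n) = 0).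
  { intros X p q HXc HX.
    rewrite (is_RInt_unique (V:=R_CompleteNormedModule) _ _ _ _ (int_periodic_sum X n HXc)).
    rewrite (RInt_ext (V:=R_CompleteNormedModule) _ (fun _ => 0)).
    - rewrite RInt_const. unfold scal; simpl. unfold mult; simpl. ring.
    - intros x Hx. rewrite Rmin_left in Hx by lra. rewrite Rmax_right in Hx by lra.
      set (al := p (ph beta x) * z 0%nat + q (ph beta x) * z 1%nat).
      set (ga := p (ph beta x) * z 2%nat + q (ph beta x) * z 3%nat).
      rewrite (sumn_ext _ (fun k => (al * m11 x) * a11 (pw M k) + (al * m12 x) * a21 (pw M k)
                                  + (ga * m11 x) * a12 (pw M k) + (ga * m12 x) * a22 (pw M k))).
      + rewrite (sumn_lin4 (fun k => a11 (pw M k)) (fun k => a21 (pw M k)) (fun k => a12 (pw M k)) (fun k => a22 (pw M k))).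
        rewrite Z11, Z12, Z21, Z22. rewrite !Rmult_0_r, !Rplus_0_r. reflexivity.
      + intros k _. assert (0 <= INR k) by apply pos_INR.
        rewrite HX by lra. rewrite phk by lra.
        destruct (perk k x ltac:(lra)) as [A1 [A2 _]]. rewrite A1, A2. unfold al, ga. ring. }
  unfold loop_center.
  assert (Str : forall T, 0 <= T -> Wa beta u 1%nat T = 0 /\ Wa beta u 3%nat T = 0 /\ Wb beta u 0%nat T = 0 /\
      Wb beta u 2%nat T = 0 /\ Wb beta u 1%nat T = m11 T /\ Wb beta u 3%nat T = m12 T).
  { intros T HT. destruct (S1 T HT) as [s1a _]. destruct (S3 T HT) as [s3a _].
    destruct (S0 T HT) as [s0b _]. destruct (S2 T HT) as [s2b _].
    destruct (S10 T HT) as [s10b _]. destruct (S32 T HT) as [s32b _].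
    repeat split; auto; lra. }
  assert (Hc : forall r x, (r < 4)%nat -> continuous (fun t => u t r 0%nat * z 0%nat + u t r 1%nat * z 1%nat + u t r 2%nat * z 2%nat + u t r 3%nat * z 3%nat) x).
  { intros r x Hr.
    assert (forall l, (l < 4)%nat -> continuous (fun t => u t r l * z l) x).
    { intros l Hl. apply (Cmult (fun t => u t r l)). apply (u_cont beta); auto. apply Cconst. }
    repeat apply Cplus; apply H; lia. }
  destruct i as [|[|i]]; [ | | lia].
  - rewrite (Final _ cos sin); [ring | intro; apply Hc; lia |].
    intros T HT. destruct (Str T HT) as [E1 [E2 [E3 [E4 [E5 E6]]]]].
    destruct (Uinv T 0%nat) as [X0 _]. destruct (Uinv T 1%nat) as [X1 _].
    destruct (Uinv T 2%nat) as [X2 _]. destruct (Uinv T 3%nat) as [X3 _].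
    rewrite X0, X1, X2, X3, E1, E2, E3, E4, E5, E6. fold m11 m12. ring.
  - rewrite (Final _ (fun x => - sin x) cos); [ring | intro; apply Hc; lia |].
    intros T HT. destruct (Str T HT) as [E1 [E2 [E3 [E4 [E5 E6]]]]].
    destruct (Uinv T 0%nat) as [_ [X0 _]]. destruct (Uinv T 1%nat) as [_ [X1 _]].
    destruct (Uinv T 2%nat) as [_ [X2 _]]. destruct (Uinv T 3%nat) as [_ [X3 _]].
    rewrite X0, X1, X2, X3, E1, E2, E3, E4, E5, E6. fold m11 m12. ring.
Qed.
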